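(* Let $L\subseteq\Sigma^*$ be a regular language with $\kappa(L)=n$. If $n=1$ (and $L$ is closed), then $\kappa(L^R)=1$. If $n\ge 2$: 1. if $L$ is prefix-closed, $\kappa(L^R)\le 2^{n-1}$, and this is tight over alphabets with $|\Sigma|\ge 2$; 2. if $L$ is suffix-closed, $\kappa(L^R)\le 2^{n-1}+1$, and this is tight over alphabets with $|\Sigma|\ge 3$; 3. if $L$ is factor-closed, $\kappa(L^R)\le 2^{n-2}+1$, and this is tight over alphabets with $|\Sigma|\ge 3$; 4. if $L$ is subword-closed, $\kappa(L^R)\le 2^{n-2}+1$, and this is tight over alphabets with $|\Sigma|\ge 2n$. Here ''tight'' means that for every $n\ge 2$ there is a language of the given class over such an alphabet with $\kappa(L)=n$ attaining the bound.
   Context: $\Sigma$ is a finite non-empty alphabet. $L_w=\{x\mid wx\in L\}$ is the left quotient of $L$ by $w$, and $\kappa(L)$ is the number of distinct quotients of $L$ (its state complexity). $L^R=\{w^R\mid w\in L\}$, where $w^R$ is the reversal of $w$. A language is prefix-closed (suffix-, factor-, subword-closed) if it contains every prefix (suffix, factor, subword) of each of its words, where subword means scattered subsequence. *)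

(* Defs.v *)
From mathcomp Require Import all_boot.
Set Implicit Arguments. Unset Strict Implicit. Unset Printing Implicit Defensive.

Definition lang (S : finType) := seq S -> bool.

Definition lang_eq (S : finType) (L1 L2 : lang S) : Prop := forall x, L1 x = L2 x.

Definition quot (S : finType) (L : lang S) (w : seq S) : lang S :=
  fun x => L (w ++ x).

Definition rev_lang (S : finType) (L : lang S) : lang S := fun w => L (rev w).

(* kappa(L) = n : L has exactly n distinct quotients, i.e. there are words
   w_0..w_{n-1} with pairwise distinct quotients, and every quotient is one of them. *)
Definition sc_eq (S : finType) (L : lang S) (n : nat) : Prop :=
  exists ws : seq (seq S),
    size ws = n /\
    (forall i j, i < n -> j < n -> i != j ->
       ~ lang_eq (quot L (nth [::] ws i)) (quot L (nth [::] ws j))) /\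
    (forall w, exists2 u, u \in ws & lang_eq (quot L w) (quot L u)).

Definition sc_le (S : finType) (L : lang S) (m : nat) : Prop :=
  exists ws : seq (seq S), size ws <= m /\
    (forall w, exists2 u, u \in ws & lang_eq (quot L w) (quot L u)).

Definition prefix_closed (S : finType) (L : lang S) : Prop :=
  forall u v, L (u ++ v) -> L u.
Definition suffix_closed (S : finType) (L : lang S) : Prop :=
  forall u v, L (u ++ v) -> L v.
Definition factor_closed (S : finType) (L : lang S) : Prop :=
  forall u v w, L (u ++ v ++ w) -> L v.
(* subword = scattered subsequence (mathcomp's subseq) *)
Definition subword_closed (S : finType) (L : lang S) : Prop :=
  forall u v, subseq u v -> L v -> L u.

(* Main.v *)
Require Import Defs.
From mathcomp Require Import all_boot.
From Stdlib Require Import Classical ClassicalEpsilon.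
Set Implicit Arguments. Unset Strict Implicit. Unset Printing Implicit Defensive.


Section General.
Variable S : finType.
Implicit Types (K L : lang S) (w u v x : seq S).

Lemma lang_eq_sym (A B : lang S) : lang_eq A B -> lang_eq B A.
Proof. by move=> h x; rewrite h. Qed.
Lemma lang_eq_trans (A B C : lang S) : lang_eq A B -> lang_eq B C -> lang_eq A C.
Proof. by move=> h1 h2 x; rewrite h1 h2. Qed.

Lemma sc_le_of_fun (X : eqType) K (R : seq X) (f : seq S -> X) m :
  size R <= m -> (forall w, f w \in R) ->
  (forall w w', f w = f w' -> lang_eq (quot K w) (quot K w')) -> sc_le K m.
Proof.
move=> hs hR hf.
pose g (t : X) : seq S := epsilon (inhabits [::]) (fun w => f w = t).
exists (map g R); split; first by rewrite size_map.
move=> w; exists (g (f w)); first by apply: map_f.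
apply: hf; rewrite /g; symmetry.
by apply: (epsilon_spec (inhabits [::]) (fun w' => f w' = f w)); exists w.
Qed.

Lemma sc_eq_of_le K m (ws : seq (seq S)) :
  sc_le K m -> size ws = m ->
  (forall i j, i < m -> j < m -> i != j ->
     ~ lang_eq (quot K (nth [::] ws i)) (quot K (nth [::] ws j))) ->
  sc_eq K m.
Proof.
move=> [cs [hcs hcov]] hws hd; exists ws; split=> //; split=> // w.
apply: NNPP => hno.
pose g (u : seq S) : seq S :=
  epsilon (inhabits [::]) (fun c => c \in cs /\ lang_eq (quot K u) (quot K c)).
have gP u : g u \in cs /\ lang_eq (quot K u) (quot K (g u)).
  have [c hc he] := hcov u.
  by apply: (epsilon_spec (inhabits [::]) (fun c => c \in cs /\ lang_eq (quot K u) (quot K c))); exists c.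
pose l := rcons ws w.
have hl : size l = m.+1 by rewrite size_rcons hws.
have nl1 i : i < m -> nth [::] l i = nth [::] ws i by move=> hi; rewrite /l nth_rcons hws hi.
have nl2 : nth [::] l m = w by rewrite /l nth_rcons hws ltnn eqxx.
have dist : forall i j, i < m.+1 -> j < m.+1 -> i != j ->
    ~ lang_eq (quot K (nth [::] l i)) (quot K (nth [::] l j)).
  have key i : i < m -> ~ lang_eq (quot K (nth [::] l i)) (quot K (nth [::] l m)).
    move=> him he; apply: hno; exists (nth [::] ws i).
      by apply: mem_nth; rewrite hws.
    by apply: lang_eq_sym; rewrite nl1 // nl2 in he.
  move=> i j; rewrite !ltnS (leq_eqVlt i) (leq_eqVlt j) => /orP [/eqP ->|him] /orP [/eqP ->|hjm] hij.
  - by rewrite eqxx in hij.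
  - by move=> he; apply: (key j hjm (lang_eq_sym he)).
  - exact: key.
  - rewrite !nl1 //; exact: hd.
have hu : uniq (map g l).
  apply/(uniqP [::]) => i j; rewrite !inE size_map hl => hi hj.
  rewrite !(nth_map [::]) ?hl // => hg.
  apply/eqP; apply: contraT => hij; exfalso; apply: (dist i j hi hj hij).
  have [_ h1] := gP (nth [::] l i); have [_ h2] := gP (nth [::] l j).
  rewrite hg in h1; apply: (lang_eq_trans h1); exact: lang_eq_sym.
have hsub : {subset map g l <= cs}.
  by move=> c /mapP [u _ ->]; case: (gP u).
have := uniq_leq_size hu hsub; rewrite size_map hl => h.
by have := leq_trans h hcs; rewrite ltnn.
Qed.
End General.


Fixpoint allbits (m : nat) : seq (seq bool) :=
  if m is m'.+1 then map (cons true) (allbits m') ++ map (cons false) (allbits m')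
  else [:: [::]].

Lemma size_allbits m : size (allbits m) = 2 ^ m.
Proof. by elim: m => //= m IH; rewrite size_cat !size_map IH expnS mul2n addnn. Qed.

Lemma mem_map_cons (b b' : bool) s (A : seq (seq bool)) :
  (b :: s \in map (cons b') A) = (b == b') && (s \in A).
Proof.
apply/mapP/andP => [[t ht [-> ->]]|[/eqP -> hs]]; first by [].
by exists s.
Qed.

Lemma mem_allbits m s : (s \in allbits m) = (size s == m).
Proof.
elim: m s => [|m IH] [|b s] //=.
- rewrite (_ : (0 == m.+1) = false) // mem_cat; apply/negbTE/negP.
  by move=> /orP [] /mapP [].
- rewrite mem_cat !mem_map_cons eqSS -IH; by destruct b; rewrite /= ?orbF.
Qed.

Lemma uniq_allbits m : uniq (allbits m).
Proof.
have ci b : injective (@cons bool b) by move=> x y [].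
elim: m => //= m IH; rewrite cat_uniq !(map_inj_uniq (ci _)) IH /=.
rewrite andbT; apply/hasPn => x /mapP [y _ ->]; apply/negP => /mapP [z _] //.
Qed.

Lemma bits_diff (s s' : seq bool) m : size s = m -> size s' = m -> s != s' ->
  exists2 j, j < m & nth false s j != nth false s' j.
Proof.
move=> hs hs' hne; apply: NNPP => hno; move/negP: hne; apply.
apply/eqP; apply: (eq_from_nth (x0 := false)); first by rewrite hs hs'.
move=> j; rewrite hs => hj; apply/eqP; apply: contraT => hn; exfalso; apply: hno.
by exists j.
Qed.

Lemma size_filter_C1 (T : eqType) (x : T) (s : seq T) : x \in s -> size (filter (predC1 x) s) < size s.
Proof.
elim: s => // y s IH; rewrite inE; case: (x =P y) => [<-|hxy] hx.
  rewrite [filter _ _]/= eqxx [size (_ :: _)]/= ltnS size_filter; exact: count_size.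
rewrite [filter _ _]/= (_ : (y != x) = true); last by apply/eqP => h; apply: hxy.
by rewrite /= ltnS IH.
Qed.

Section Upper.
Variable S : finType.
Implicit Types (K L : lang S) (w u v x : seq S).

Lemma rev_quot L w x : quot (rev_lang L) w x = L (rev x ++ rev w).
Proof. by rewrite /quot /rev_lang rev_cat. Qed.

Lemma sc_eq_two_diff L n : 2 <= n -> sc_eq L n -> exists u u', ~ lang_eq (quot L u) (quot L u').
Proof.
move=> hn [ws [hs [hd _]]]; exists (nth [::] ws 0), (nth [::] ws 1).
by apply: hd => //; apply: leq_trans hn.
Qed.

Lemma prefix_dead L n : 2 <= n -> sc_eq L n -> prefix_closed L -> exists v, L v = false.
Proof.
move=> hn hL hp; apply: NNPP => hno.
have hall v : L v by case e: (L v) => //; exfalso; apply: hno; exists v.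
have [u [u' h]] := sc_eq_two_diff hn hL; apply: h => x; by rewrite /quot !hall.
Qed.

Lemma prefix_upper L n : 2 <= n -> sc_eq L n -> prefix_closed L -> sc_le (rev_lang L) (2 ^ n.-1).
Proof.
move=> hn hL hp; have [v hv] := prefix_dead hn hL hp.
move: (hL) => [ws [hs [hd hcov]]].
have [k hk hke] := hcov v.
have kdead x : L (k ++ x) = false.
  have := hke x; rewrite /quot => <-; apply/negbTE/negP => /hp; by rewrite hv.
pose vs := filter (predC1 k) ws.
apply: (sc_le_of_fun (R := allbits (size vs)) (f := fun w => [seq L (u ++ rev w) | u <- vs])).
- rewrite size_allbits; apply: leq_pexp2l => //.
  have := size_filter_C1 hk; rewrite -/vs hs.
  by case: n {hd hcov hs hL hn} => // n'.
- by move=> w; rewrite mem_allbits size_map.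
- move=> w w' heq x; rewrite !rev_quot.
  have [u hu hue] := hcov (rev x).
  have e1 := hue (rev w); have e2 := hue (rev w'); rewrite /quot in e1 e2; rewrite e1 e2.
  case: (u =P k) => [->|hne]; first by rewrite !kdead.
  have huv : u \in vs by rewrite mem_filter /= hu andbT; apply/eqP.
  by move/eq_in_map: heq => /(_ u huv).
Qed.


Lemma suffix_upper L n : sc_eq L n -> suffix_closed L -> sc_le (rev_lang L) (2 ^ n.-1 + 1).
Proof.
move=> hL hs; move: (hL) => [ws [hsz [hd hcov]]].
have [i0 hi0 hi0e] := hcov [::].
have i0P x : L (i0 ++ x) = L x by have := hi0e x; rewrite /quot.
pose vs := filter (predC1 i0) ws.
apply: (sc_le_of_fun (R := None :: map Some (allbits (size vs)))
   (f := fun w => if L (rev w) then Some [seq L (u ++ rev w) | u <- vs] else None)).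
- rewrite /= size_map size_allbits addn1 ltnS leq_pexp2l // -ltnS.
  have := size_filter_C1 hi0; rewrite -/vs hsz.
  by case: n {hd hcov hsz hL} => // n'.
- move=> w; case: (L (rev w)); last by rewrite inE eqxx.
  rewrite inE /=.
  by rewrite (mem_map (@Some_inj _)) mem_allbits size_map.
- move=> w w' heq x; rewrite !rev_quot.
  have [u hu hue] := hcov (rev x).
  have e1 := hue (rev w); have e2 := hue (rev w'); rewrite /quot in e1 e2; rewrite e1 e2.
  case e: (L (rev w)) heq; case e': (L (rev w')) => // heq.
  + case: (u =P i0) => [->|hne]; first by rewrite !i0P e e'.
    have huv : u \in vs by rewrite mem_filter /= hu andbT; apply/eqP.
    case: heq => /eq_in_map /(_ u huv) //.
  + by apply/idP/idP => /hs; rewrite ?e ?e'.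
Qed.

Lemma factor_prefix L : factor_closed L -> prefix_closed L.
Proof. by move=> hf u v h; apply: (hf [::] u v). Qed.
Lemma factor_suffix L : factor_closed L -> suffix_closed L.
Proof. by move=> hf u v h; apply: (hf u v [::]); rewrite cats0. Qed.

Lemma factor_upper L n : 2 <= n -> sc_eq L n -> factor_closed L ->
  sc_le (rev_lang L) (2 ^ (n - 2) + 1).
Proof.
move=> hn hL hf; have hp := factor_prefix hf; have hs := factor_suffix hf.
have [v hv] := prefix_dead hn hL hp.
move: (hL) => [ws [hsz [hd hcov]]].
have [k hk hke] := hcov v.
have kdead x : L (k ++ x) = false.
  have := hke x; rewrite /quot => <-; apply/negbTE/negP => /hp; by rewrite hv.
have [i0 hi0 hi0e] := hcov [::].
have i0P x : L (i0 ++ x) = L x by have := hi0e x; rewrite /quot.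
have hki : i0 != k.
  apply/eqP => e; have [u [u' h]] := sc_eq_two_diff hn hL; apply: h => x.
  by rewrite /quot -(i0P (u ++ x)) -(i0P (u' ++ x)) e !kdead.
pose vs1 := filter (predC1 k) ws.
pose vs := filter (predC1 i0) vs1.
have hvs : size vs <= n - 2.
  have h1 := size_filter_C1 hk; rewrite -/vs1 hsz in h1.
  have h2 : size vs < size vs1 by apply: size_filter_C1; rewrite mem_filter /= hki.
  by rewrite (leq_subRL _ hn) add2n; exact: leq_ltn_trans h2 h1.
apply: (sc_le_of_fun (R := None :: map Some (allbits (size vs)))
   (f := fun w => if L (rev w) then Some [seq L (u ++ rev w) | u <- vs] else None)).
- by rewrite /= size_map size_allbits addn1 ltnS leq_pexp2l.
- move=> w; case: (L (rev w)); last by rewrite inE eqxx.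
  rewrite inE /=.
  by rewrite (mem_map (@Some_inj _)) mem_allbits size_map.
- move=> w w' heq x; rewrite !rev_quot.
  have [u hu hue] := hcov (rev x).
  have e1 := hue (rev w); have e2 := hue (rev w'); rewrite /quot in e1 e2; rewrite e1 e2.
  case e: (L (rev w)) heq; case e': (L (rev w')) => // heq.
  + case: (u =P k) => [->|hne]; first by rewrite !kdead.
    case: (u =P i0) => [->|hne']; first by rewrite !i0P e e'.
    have huv : u \in vs by rewrite !mem_filter /= hu andbT; apply/andP; split; apply/eqP.
    case: heq => /eq_in_map /(_ u huv) //.
  + by apply/idP/idP => /hs; rewrite ?e ?e'.
Qed.

Lemma subword_factor L : subword_closed L -> factor_closed L.
Proof.
move=> hw u v w h; apply: (hw v (u ++ v ++ w)) => //.
apply: (subseq_trans (prefix_subseq v w)); exact: suffix_subseq.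
Qed.

Lemma closed_one L : sc_eq L 1 -> sc_eq (rev_lang L) 1.
Proof.
move=> [ws [hs [_ hcov]]].
have hc v y : L (v ++ y) = L y.
  have [u hu he1] := hcov v; have [u' hu' he2] := hcov [::].
  have : u = u' by case: ws hs hu hu' {hcov} => [|z [|]] //= _; rewrite !inE => /eqP -> /eqP ->.
  by move=> e; rewrite -[L (v ++ y)]/(quot L v y) he1 e -he2.
exists [:: [::]]; split => //; split.
  by move=> [|i] [|j].
move=> w; exists [::]; rewrite ?inE // => x.
have hc' y : L y = L [::] by rewrite -[y]cats0 hc.
by rewrite !rev_quot (hc' (rev x ++ rev w)) (hc' (rev x ++ rev [::])).
Qed.
End Upper.


Section DFA.
Variables (S : finType) (X : eqType) (step : X -> S -> X).

Definition run (s : X) (w : seq S) := foldl step s w.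

Lemma run_cat s u v : run s (u ++ v) = run (run s u) v.
Proof. exact: foldl_cat. Qed.
Lemma run_cons s c w : run s (c :: w) = run (step s c) w.
Proof. by []. Qed.

Lemma dfa_sc_eq (s0 : X) (acc : X -> bool) (qs : seq X) (aw : X -> seq S) n :
  size qs = n ->
  (forall w, run s0 w \in qs) ->
  (forall q, q \in qs -> run s0 (aw q) = q) ->
  (forall i j, i < n -> j < n -> i != j ->
     exists x, acc (run (nth s0 qs i) x) != acc (run (nth s0 qs j) x)) ->
  sc_eq (fun w => acc (run s0 w)) n.
Proof.
move=> hs hin haw hd; exists (map aw qs); split; first by rewrite size_map.
split.
  move=> i j hi hj hij he; have [x hx] := hd i j hi hj hij.
  have := he x; rewrite /quot !(nth_map s0) ?hs // !run_cat !haw ?mem_nth ?hs //.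
  by move=> e; rewrite e eqxx in hx.
move=> w; exists (aw (run s0 w)); first by apply: map_f.
by move=> x; rewrite /quot !run_cat haw.
Qed.

Lemma dfa_rev_quot (s0 : X) (acc : X -> bool) v x :
  quot (rev_lang (fun w => acc (run s0 w))) v x = acc (run (run s0 (rev x)) (rev v)).
Proof. by rewrite rev_quot run_cat. Qed.

Lemma dfa_rev_dist (s0 : X) (acc : X -> bool) (aw : X -> seq S) v v' q :
  run s0 (aw q) = q -> acc (run q (rev v)) != acc (run q (rev v')) ->
  ~ lang_eq (quot (rev_lang (fun w => acc (run s0 w))) v)
            (quot (rev_lang (fun w => acc (run s0 w))) v').
Proof.
move=> hq hne he; have := he (rev (aw q)); rewrite !dfa_rev_quot revK hq => e.
by rewrite e eqxx in hne.
Qed.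

Section Rot.
Variables (m' : nat) (a b : S) (p : nat -> X) (Z : X).
Local Notation m := m'.+1.
Hypothesis hA : forall r, step (p r) a = p (r.+1 %% m).
Hypothesis hB : forall r, step (p r) b = if r == m' then Z else p (r.+1 %% m).
Hypothesis hZa : step Z a = Z.
Hypothesis hZb : step Z b = Z.
Hypothesis hpZ : forall r, p r != Z.

Definition tolet (x : bool) := if x then b else a.

Fixpoint hit (r : nat) (t : seq bool) : bool :=
  if t is x :: t' then (x && (r %% m == m')) || hit r.+1 t' else false.

Lemma Z_run t : run Z (map tolet t) = Z.
Proof. by elim: t => //= x t IH; rewrite /tolet; case: x; rewrite ?hZa ?hZb. Qed.

Lemma modS_mod r : (r %% m).+1 %% m = r.+1 %% m.
Proof. by rewrite -[(r %% m).+1]addn1 -[r.+1]addn1 modnDml. Qed.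

Lemma rot_run t r : run (p (r %% m)) (map tolet t) = if hit r t then Z else p ((r + size t) %% m).
Proof.
elim: t r => [|x t IH] r; first by rewrite addn0.
rewrite map_cons run_cons [hit _ _]/= [size _]/= /tolet; case: x => /=.
  rewrite hB; case: (r %% m == m') => /=; first exact: Z_run.
  by rewrite modS_mod -/tolet IH addSnnS.
by rewrite hA modS_mod -/tolet IH addSnnS.
Qed.

Lemma hit_nseq r k : hit r (nseq k false) = false.
Proof. by elim: k r => //= k IH r; rewrite IH. Qed.

Lemma hit_rcons_nseq r k : hit r (rcons (nseq k false) true) = ((r + k) %% m == m').
Proof. by elim: k r => [|k IH] r /=; rewrite ?orbF ?addn0 // IH addSnnS. Qed.

Lemma run_nseq_a r k : r < m -> run (p r) (nseq k a) = p ((r + k) %% m).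
Proof.
move=> hr; have := rot_run (nseq k false) r.
by rewrite modn_small // hit_nseq size_nseq map_nseq.
Qed.

Lemma key_mod i j : i < m -> j < m -> ((i + (m' - j)) %% m == m') = (i == j).
Proof.
rewrite !ltnS => hi hj; case: (leqP i j) => hij.
  have hv : i + (m' - j) <= m' by rewrite -{2}(subnKC hj) leq_add2r.
  rewrite modn_small; last by rewrite ltnS.
  apply/eqP/eqP => [e|->]; last by rewrite subnKC.
  by apply/eqP; rewrite -(eqn_add2r (m' - j)) e subnKC.
have hij0 : 0 < i - j by rewrite subn_gt0.
have e1 : i + (m' - j) = i + m' - j by rewrite addnBA.
have e2 : (i - j).-1 + m'.+1 = m' + i - j.
  by rewrite addnS -addSn prednK // addnC addnBA // ltnW.
rewrite e1 (addnC i) -e2 modnDr modn_small; last first.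
  by rewrite ltnS (leq_trans (leq_pred _)) // (leq_trans (leq_subr j i)).
rewrite (gtn_eqF hij) ltn_eqF //.
apply: (@leq_trans i) => //.
by rewrite prednK // leq_subr.
Qed.

Lemma dist_run r r' : r < m -> r' < m ->
  (run (p r') (nseq (m' - r) a ++ [:: b]) == Z) = (r' == r).
Proof.
move=> hr hr'; have := rot_run (rcons (nseq (m' - r) false) true) r'.
rewrite modn_small // map_rcons map_nseq /= cats1 hit_rcons_nseq key_mod //.
move=> ->; case: (r' =P r) => h; first by rewrite eqxx.
by rewrite (negbTE (hpZ _)).
Qed.

Lemma has_eqj (P : nat -> bool) j s : has (fun i => P i && (i == j)) s = (j \in s) && P j.
Proof.
apply/hasP/andP => [[i hi /andP [hp /eqP e]]|[hj hp]]; first by subst i.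
by exists j => //; rewrite hp eqxx.
Qed.

Lemma hit_has r t : hit r t = has (fun i => nth false t i && ((r + i) %% m == m')) (iota 0 (size t)).
Proof.
elim: t r => //= x t IH r; rewrite addn0 IH; congr (_ || _).
by rewrite -(addn0 1) iotaDl has_map; apply: eq_has => i /=; rewrite add1n addSnnS.
Qed.

Lemma bits_run s j : size s = m -> j < m ->
  (run (p (m' - j)) (map tolet s) == Z) = nth false s j.
Proof.
move=> hs hj; have := rot_run s (m' - j).
rewrite modn_small; last by rewrite ltnS leq_subr.
move=> ->; rewrite hit_has hs.
rewrite (@eq_in_has _ _ (fun i => nth false s i && (i == j))); last first.
  by move=> i; rewrite mem_iota add0n /= => hi; rewrite addnC key_mod.
rewrite has_eqj mem_iota add0n hj /=.
case: ifP => _; first by rewrite eqxx.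
by rewrite (negbTE (hpZ _)).
Qed.
End Rot.
End DFA.


Lemma letters (S : finType) k : k <= #|S| -> exists xs : seq S, size xs = k /\ uniq xs.
Proof.
move=> hk; exists (take k (enum S)); split.
  by rewrite size_takel // -cardT.
by apply: take_uniq; apply: enum_uniq.
Qed.

Lemma mem_qs1 (r : nat) m : (Some r \in None :: map Some (iota 0 m)) = (r < m).
Proof. by rewrite inE /= (mem_map (@Some_inj _)) mem_iota. Qed.

Lemma nth_qs1 m k x0 : k < m -> nth x0 (None :: map Some (iota 0 m)) k.+1 = Some k.
Proof. by move=> hk; rewrite /= (nth_map 0) ?size_iota // nth_iota. Qed.

Lemma run_inv (S : finType) (X : eqType) (step : X -> S -> X) (P : X -> bool) :
  (forall s c, P s -> P (step s c)) -> forall w s, P s -> P (run step s w).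
Proof. by move=> h; elim=> // c w IH s hs; rewrite run_cons; apply: IH; apply: h. Qed.

Section PrefixWitness.
Variables (S : finType) (a b : S) (m' : nat).
Hypothesis hab : a != b.
Local Notation m := m'.+1.

Definition stepP (s : option nat) (c : S) : option nat :=
  if s is Some r then
    (if c == a then Some (r.+1 %% m)
     else if c == b then (if r == m' then None else Some (r.+1 %% m)) else None)
  else None.

Definition accP (s : option nat) : bool := s != None.
Definition LP : lang S := fun w => accP (run stepP (Some 0) w).

Lemma hAP r : stepP (Some r) a = Some (r.+1 %% m).
Proof. by rewrite /= eqxx. Qed.
Lemma hBP r : stepP (Some r) b = if r == m' then None else Some (r.+1 %% m).
Proof. by rewrite /= eq_sym (negbTE hab) eqxx. Qed.
Lemma hpZP r : (Some r : option nat) != None. Proof. by []. Qed.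

Lemma runP_None w : run stepP None w = None.
Proof. by elim: w. Qed.

Lemma LP_prefix : prefix_closed LP.
Proof.
move=> u v; rewrite /LP /accP run_cat; apply: contra_neq => e.
by rewrite e runP_None.
Qed.

Definition qsP := None :: map Some (iota 0 m).
Definition awP (s : option nat) : seq S :=
  if s is Some r then nseq r a else nseq m' a ++ [:: b].

Lemma LP_sc : sc_eq LP m.+1.
Proof.
have rn := run_nseq_a hAP hBP (erefl _) (erefl _).
apply: (@dfa_sc_eq _ _ stepP (Some 0) accP qsP awP).
- by rewrite /= size_map size_iota.
- move=> w; apply: (@run_inv _ _ stepP (fun s => s \in qsP)); last by rewrite /= /qsP mem_qs1.
  rewrite /qsP; move=> [r|] c //; rewrite mem_qs1 => hr; rewrite [stepP _ _]/=.
  case: ifP => _; first by rewrite mem_qs1 ltn_pmod.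
  case: ifP => _; last by [].
  by case: ifP => _ //; rewrite mem_qs1 ltn_pmod.
- move=> [r|]; rewrite /qsP ?mem_qs1 => hr /=.
    by rewrite rn // add0n modn_small.
  by rewrite run_cat rn // add0n modn_small // run_cons hBP eqxx.
- rewrite /qsP; move=> [|i] [|j] //; rewrite !ltnS => hi hj; rewrite ?eqSS => hij.
  + by exists [::]; rewrite nth_qs1.
  + by exists [::]; rewrite nth_qs1.
  + exists (nseq (m' - i) a ++ [:: b]); rewrite !nth_qs1 //.
    have h1 := dist_run hAP hBP (erefl _) (erefl _) hpZP hi hi; have h2 := dist_run hAP hBP (erefl _) (erefl _) hpZP hi hj.
    have hji : (j == i) = false by rewrite eq_sym (negbTE hij).
    rewrite eqxx in h1; rewrite hji in h2.
    by rewrite /accP h1 h2.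
Qed.

Definition wsP := map (fun s => rev (map (tolet a b) s)) (allbits m).

Lemma LP_rev_dist i j : i < 2 ^ m -> j < 2 ^ m -> i != j ->
  ~ lang_eq (quot (rev_lang LP) (nth [::] wsP i)) (quot (rev_lang LP) (nth [::] wsP j)).
Proof.
move=> hi hj hij.
have hi' : i < size (allbits m) by rewrite size_allbits.
have hj' : j < size (allbits m) by rewrite size_allbits.
rewrite /wsP !(nth_map [::]) //.
set s := nth [::] (allbits m) i; set s' := nth [::] (allbits m) j.
have hs : size s = m by apply/eqP; rewrite -mem_allbits mem_nth.
have hs' : size s' = m by apply/eqP; rewrite -mem_allbits mem_nth.
have hne : s != s' by rewrite nth_uniq // uniq_allbits.
have [j0 hj0 hd] := bits_diff hs hs' hne.
apply: (@dfa_rev_dist _ _ stepP (Some 0) accP awP _ _ (Some (m' - j0))).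
  by rewrite /= (run_nseq_a hAP hBP (erefl _) (erefl _)) // add0n modn_small // ltnS leq_subr.
rewrite !revK /accP.
have b1 := bits_run hAP hBP (erefl _) (erefl _) hpZP hs hj0; have b2 := bits_run hAP hBP (erefl _) (erefl _) hpZP hs' hj0.
by rewrite b1 b2; move: hd; case: (nth false s j0); case: (nth false s' j0).
Qed.

Lemma LP_rev_sc : sc_eq (rev_lang LP) (2 ^ m).
Proof.
apply: (@sc_eq_of_le _ _ _ wsP).
- by apply: (prefix_upper (n := m.+1)) => //; [exact: LP_sc | exact: LP_prefix].
- by rewrite size_map size_allbits.
- exact: LP_rev_dist.
Qed.
End PrefixWitness.

Lemma prefix_tight (S : finType) : 2 <= #|S| -> forall n, 2 <= n ->
  exists L : lang S, prefix_closed L /\ sc_eq L n /\ sc_eq (rev_lang L) (2 ^ n.-1).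
Proof.
move=> hS [|[|m']] // _.
have [[|a [|b xs]] [hs hu]] := letters hS => //.
have hab : a != b by move: hu; rewrite /= inE negb_or => /andP [/andP []].
exists (LP a b m'); split; first exact: LP_prefix.
by split; [exact: LP_sc | exact: LP_rev_sc].
Qed.


Section SuffixWitness.
Variables (S : finType) (a b e : S) (m' : nat).
Hypothesis hab : a != b.
Hypothesis hae : a != e.
Hypothesis hbe : b != e.
Local Notation m := m'.+1.

Definition stepS (s : option nat) (c : S) : option nat :=
  if c == a then omap (fun r => r.+1 %% m) s
  else if c == b then (if s is Some r then (if r == m' then None else Some (r.+1 %% m)) else None)
  else Some 0.

Definition accS (s : option nat) : bool := s == None.
Definition LS : lang S := fun w => accS (run stepS None w).

Lemma hAS r : stepS (Some r) a = Some (r.+1 %% m).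
Proof. by rewrite /stepS eqxx. Qed.
Lemma hBS r : stepS (Some r) b = if r == m' then None else Some (r.+1 %% m).
Proof. by rewrite /stepS eq_sym (negbTE hab) eqxx. Qed.
Lemma hZaS : stepS None a = None. Proof. by rewrite /stepS eqxx. Qed.
Lemma hZbS : stepS None b = None. Proof. by rewrite /stepS eq_sym (negbTE hab) eqxx. Qed.
Lemma hES s : stepS s e = Some 0.
Proof. by rewrite /stepS eq_sym (negbTE hae) eq_sym (negbTE hbe). Qed.

Lemma runS_suffix v s : run stepS s v == None -> run stepS None v == None.
Proof.
elim: v s => // c v IH s; rewrite !run_cons => h.
have e1 : stepS None c = if (c == a) || (c == b) then None else Some 0.
  by rewrite /stepS; case: (c == a) => //; case: (c == b).
have e2 : ~~ ((c == a) || (c == b)) -> stepS s c = Some 0.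
  by rewrite /stepS negb_or => /andP [/negbTE -> /negbTE ->].
rewrite e1; case: ifP => hc; first exact: (IH _ h).
by rewrite -e2 ?hc.
Qed.

Lemma LS_suffix : suffix_closed LS.
Proof. by move=> u v; rewrite /LS /accS run_cat; apply: runS_suffix. Qed.

Definition awS (s : option nat) : seq S :=
  if s is Some r then e :: nseq r a else [::].

Lemma LS_sc : sc_eq LS m.+1.
Proof.
have rn := run_nseq_a hAS hBS hZaS hZbS.
apply: (@dfa_sc_eq _ _ stepS None accS (qsP m') awS).
- by rewrite /= size_map size_iota.
- move=> w; apply: (@run_inv _ _ stepS (fun s => s \in qsP m')); last by rewrite /= /qsP.
  rewrite /qsP => s c hs; rewrite /stepS.
  case: ifP => _.
    by case: s hs => [r|] //; rewrite !mem_qs1 => _; rewrite ltn_pmod.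
  case: ifP => _; last by rewrite mem_qs1.
  case: s hs => [r|] // _; case: ifP => _ //; by rewrite mem_qs1 ltn_pmod.
- move=> [r|]; rewrite /qsP ?mem_qs1 => hr //.
  by rewrite /awS run_cons hES rn // add0n modn_small.
- rewrite /qsP; move=> [|i] [|j] //; rewrite !ltnS => hi hj; rewrite ?eqSS => hij.
  + by exists [::]; rewrite nth_qs1.
  + by exists [::]; rewrite nth_qs1.
  + exists (nseq (m' - i) a ++ [:: b]); rewrite !nth_qs1 //.
    have h1 := dist_run hAS hBS hZaS hZbS (fun r => isT) hi hi.
    have h2 := dist_run hAS hBS hZaS hZbS (fun r => isT) hi hj.
    have hji : (j == i) = false by rewrite eq_sym (negbTE hij).
    rewrite eqxx in h1; rewrite hji in h2.
    by rewrite /accS h1 h2.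
Qed.

Definition wsS := [:: e] :: map (fun s => rev (map (tolet a b) s)) (allbits m).

Lemma LS_rev_dist i j : i < (2 ^ m).+1 -> j < (2 ^ m).+1 -> i != j ->
  ~ lang_eq (quot (rev_lang LS) (nth [::] wsS i)) (quot (rev_lang LS) (nth [::] wsS j)).
Proof.
have Zr := Z_run hZaS hZbS.
have bot s : ~ lang_eq (quot (rev_lang LS) [:: e]) (quot (rev_lang LS) (rev (map (tolet a b) s))).
  apply: (@dfa_rev_dist _ _ stepS None accS awS _ _ None) => //.
  by rewrite revK /= /accS hES Zr.
have n0 : nth [::] wsS 0 = [:: e] by [].
have nS k : k < 2 ^ m -> nth [::] wsS k.+1 = rev (map (tolet a b) (nth [::] (allbits m) k)).
  move=> hk; change (nth [::] (map (fun s => rev (map (tolet a b) s)) (allbits m)) k = rev (map (tolet a b) (nth [::] (allbits m) k))).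
  by rewrite (nth_map [::]) ?size_allbits.
move: i j => [|i] [|j] //; rewrite !ltnS => hi hj; rewrite ?eqSS => hij.
- rewrite n0 nS //; exact: bot.
- rewrite n0 nS // => h.
  by apply: (bot (nth [::] (allbits m) i)); apply: lang_eq_sym.
have hi' : i < size (allbits m) by rewrite size_allbits.
have hj' : j < size (allbits m) by rewrite size_allbits.
rewrite !nS //.
set s := nth [::] (allbits m) i; set s' := nth [::] (allbits m) j.
have hs : size s = m by apply/eqP; rewrite -mem_allbits mem_nth.
have hs' : size s' = m by apply/eqP; rewrite -mem_allbits mem_nth.
have hne : s != s' by rewrite nth_uniq // uniq_allbits.
have [j0 hj0 hd] := bits_diff hs hs' hne.
apply: (@dfa_rev_dist _ _ stepS None accS awS _ _ (Some (m' - j0))).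
  by rewrite /awS run_cons hES (run_nseq_a hAS hBS hZaS hZbS) // add0n modn_small // ltnS leq_subr.
rewrite !revK /accS.
have b1 := bits_run hAS hBS hZaS hZbS (fun r => isT) hs hj0.
have b2 := bits_run hAS hBS hZaS hZbS (fun r => isT) hs' hj0.
by rewrite b1 b2.
Qed.

Lemma LS_rev_sc : sc_eq (rev_lang LS) (2 ^ m + 1).
Proof.
apply: (@sc_eq_of_le _ _ _ wsS).
- by apply: (suffix_upper (n := m.+1)); [exact: LS_sc | exact: LS_suffix].
- by rewrite /wsS; set l := allbits m; rewrite /= size_map /l size_allbits addn1.
- by rewrite addn1; exact: LS_rev_dist.
Qed.
End SuffixWitness.

Lemma three_letters (S : finType) : 3 <= #|S| -> exists a b e : S, [/\ a != b, a != e & b != e].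
Proof.
move=> hS; have [[|a [|b [|e xs]]] [hs hu]] := letters hS => //.
exists a, b, e; move: hu; rewrite /= !inE !negb_or => /andP [/andP [hab /andP [hae _]]] /andP [/andP [hbe _] _].
by [].
Qed.

Lemma suffix_tight (S : finType) : 3 <= #|S| -> forall n, 2 <= n ->
  exists L : lang S, suffix_closed L /\ sc_eq L n /\ sc_eq (rev_lang L) (2 ^ n.-1 + 1).
Proof.
move=> hS [|[|m']] // _.
have [a [b [e [hab hae hbe]]]] := three_letters hS.
exists (LS a b m'); split; first exact: LS_suffix.
by split; [exact: (LS_sc (e := e) m' hab hae hbe) | exact: (LS_rev_sc (e := e) m' hab hae hbe)].
Qed.


Section Astar.
Variables (S : finType) (a z : S).
Hypothesis haz : a != z.

Definition stepA (s : bool) (c : S) : bool := s && (c == a).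
Definition LA : lang S := fun w => id (run stepA true w).

Lemma runA s w : run stepA s w = s && all (pred1 a) w.
Proof.
elim: w s => [|c w IH] s; first by rewrite andbT.
by rewrite run_cons IH /stepA [all _ _]/= andbA.
Qed.

Lemma LA_subword : subword_closed LA.
Proof.
move=> u v hs; rewrite /LA !runA /= => hv.
apply/allP => x hx; apply: (allP hv); exact: (mem_subseq hs hx).
Qed.

Definition awA (s : bool) : seq S := if s then [::] else [:: z].

Lemma LA_sc : sc_eq LA 2.
Proof.
apply: (@dfa_sc_eq _ _ stepA true id [:: false; true] awA).
- by [].
- by move=> w; rewrite !inE; case: (run stepA true w).
- move=> [] _ //; rewrite /awA run_cons /stepA /=.
  by rewrite eq_sym (negbTE haz).
- by move=> [|[|i]] [|[|j]] // _ _ _; exists [::].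
Qed.

Lemma LA_rev_sc : sc_eq (rev_lang LA) 2.
Proof.
apply: (@sc_eq_of_le _ _ _ [:: [:: z]; [::]]).
- apply: (factor_upper (n := 2)) => //; first exact: LA_sc.
  exact: subword_factor LA_subword.
- by [].
- move=> [|[|i]] [|[|j]] // _ _ _.
  + apply: (@dfa_rev_dist _ _ stepA true id awA _ _ true) => //.
    by rewrite /awA run_cons /stepA /= (eq_sym z) (negbTE haz).
  + apply: (@dfa_rev_dist _ _ stepA true id awA _ _ true) => //.
    by rewrite /awA run_cons /stepA /= (eq_sym z) (negbTE haz).
Qed.
End Astar.

Section FactorWitness.
Variables (S : finType) (a b e : S) (m' : nat).
Hypothesis hab : a != b.
Hypothesis hae : a != e.
Hypothesis hbe : b != e.
Local Notation m := m'.+1.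

Definition stepF (s : option (option nat)) (c : S) : option (option nat) :=
  if s is Some o then
    (if c == a then Some (omap (fun r => r.+1 %% m) o)
     else if c == b then
       (if o is Some r then (if r == m' then None else Some (Some (r.+1 %% m))) else Some None)
     else Some (Some 0))
  else None.

Definition accF (s : option (option nat)) : bool := s != None.
Definition LF : lang S := fun w => accF (run stepF (Some None) w).
Definition pF (r : nat) : option (option nat) := Some (Some r).

Lemma hAF r : stepF (pF r) a = pF (r.+1 %% m).
Proof. by rewrite /stepF eqxx. Qed.
Lemma hBF r : stepF (pF r) b = if r == m' then None else pF (r.+1 %% m).
Proof. by rewrite /stepF eq_sym (negbTE hab) eqxx. Qed.
Lemma hZaF : stepF None a = None. Proof. by []. Qed.
Lemma hZbF : stepF None b = None. Proof. by []. Qed.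
Lemma hpZF r : pF r != None. Proof. by []. Qed.
Lemma hEF o : stepF (Some o) e = Some (Some 0).
Proof. by rewrite /stepF eq_sym (negbTE hae) eq_sym (negbTE hbe). Qed.

Lemma runF_None w : run stepF None w = None.
Proof. by elim: w. Qed.

Lemma runF_done t : run stepF (Some None) (map (tolet a b) t) = Some None.
Proof.
elim: t => // x t IH; rewrite map_cons run_cons /tolet.
case: x; rewrite /stepF ?eqxx ?(eq_sym b a) ?(negbTE hab) ?eqxx //.
Qed.

Lemma runF_suffix v s : run stepF s v != None -> run stepF (Some None) v != None.
Proof.
elim: v s => [|c v IH] s; first by [].
case: s => [o|]; last by rewrite runF_None.
rewrite !run_cons => h.
have e1 : stepF (Some None) c = if (c == a) || (c == b) then Some None else Some (Some 0).
  by rewrite /stepF; case: (c == a) => //; case: (c == b).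
have e2 : ~~ ((c == a) || (c == b)) -> stepF (Some o) c = Some (Some 0).
  by rewrite /stepF negb_or => /andP [/negbTE -> /negbTE ->].
rewrite e1; case: ifP => hc; first exact: (IH _ h).
by rewrite -e2 ?hc.
Qed.

Lemma LF_factor : factor_closed LF.
Proof.
move=> u v w; rewrite /LF /accF !run_cat => h.
apply: (runF_suffix (s := run stepF (Some None) u)).
by apply: contra_neq h => ->; rewrite runF_None.
Qed.

Definition qsF : seq (option (option nat)) := None :: Some None :: map pF (iota 0 m).

Lemma mem_qsF r : (pF r \in qsF) = (r < m).
Proof.
have h l : (pF r \in None :: Some None :: map pF l) = (r \in l).
  by rewrite !in_cons (mem_map (fun x y (h : pF x = pF y) => ltac:(by case: h))).
by rewrite /qsF h mem_iota.
Qed.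
Lemma nth_qsF k x0 : k < m -> nth x0 qsF k.+2 = pF k.
Proof.
move=> hk; change (nth x0 (map pF (iota 0 m)) k = pF k).
by rewrite (nth_map 0) ?size_iota // nth_iota.
Qed.

Definition awF (s : option (option nat)) : seq S :=
  match s with
  | Some (Some r) => e :: nseq r a
  | Some None => [::]
  | None => e :: nseq m' a ++ [:: b]
  end.

Lemma awF_None s : s != None -> run stepF s (awF None) = None.
Proof.
case: s => [o|] // _; rewrite /awF run_cons hEF run_cat.
rewrite (run_nseq_a hAF hBF hZaF hZbF) // add0n modn_small //.
by rewrite run_cons hBF eqxx.
Qed.


Lemma nseqb k : nseq k a ++ [:: b] = map (tolet a b) (rcons (nseq k false) true).
Proof. by rewrite map_rcons map_nseq cats1. Qed.

Lemma LF_sc : sc_eq LF m.+2.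
Proof.
have rn := run_nseq_a hAF hBF hZaF hZbF.
have dr := dist_run hAF hBF hZaF hZbF hpZF.
apply: (@dfa_sc_eq _ _ stepF (Some None) accF qsF awF).
- by rewrite /= size_map size_iota.
- move=> w; apply: (@run_inv _ _ stepF (fun s => s \in qsF)); last by rewrite /= /qsF !inE eqxx orbT.
  move=> [[r|]|] c //= hs; rewrite /stepF.
  + rewrite mem_qsF in hs.
    case: ifP => _; first by rewrite /= -/(pF _) mem_qsF ltn_pmod.
    case: ifP => _; last by rewrite -/(pF _) mem_qsF.
    by case: ifP => _; [rewrite /qsF in_cons eqxx | rewrite -/(pF _) mem_qsF ltn_pmod].
  + case: ifP => _; first by rewrite /= !inE eqxx orbT.
    case: ifP => _; first by rewrite /= !inE eqxx orbT.
    by rewrite -/(pF _) mem_qsF.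
- move=> [[r|]|]; rewrite ?mem_qsF => hr //.
    by rewrite /awF run_cons hEF rn // add0n modn_small.
  by rewrite awF_None.
- move=> [|[|i]] [|[|j]] //; rewrite !ltnS => hi hj; rewrite ?eqSS => hij.
  + by exists [::]; rewrite ?nth_qsF.
  + by exists [::]; rewrite ?nth_qsF.
  + by exists [::]; rewrite ?nth_qsF.
  + exists (nseq (m' - j) a ++ [:: b]); rewrite nth_qsF //=.
    have h2 := dr _ _ hj hj; rewrite eqxx in h2.
    by rewrite /accF h2 nseqb runF_done.
  + by exists [::]; rewrite ?nth_qsF.
  + exists (nseq (m' - i) a ++ [:: b]); rewrite nth_qsF //=.
    have h2 := dr _ _ hi hi; rewrite eqxx in h2.
    by rewrite /accF h2 nseqb runF_done.
  + exists (nseq (m' - i) a ++ [:: b]); rewrite !nth_qsF //.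
    have h1 := dr _ _ hi hi; have h2 := dr _ _ hi hj.
    have hji : (j == i) = false by rewrite eq_sym (negbTE hij).
    rewrite eqxx in h1; rewrite hji in h2.
    by rewrite /accF h1 h2.
Qed.

Definition wsF := rev (awF None) :: map (fun s => rev (map (tolet a b) s)) (allbits m).

Lemma LF_rev_dist i j : i < (2 ^ m).+1 -> j < (2 ^ m).+1 -> i != j ->
  ~ lang_eq (quot (rev_lang LF) (nth [::] wsF i)) (quot (rev_lang LF) (nth [::] wsF j)).
Proof.
have bot s : ~ lang_eq (quot (rev_lang LF) (rev (awF None))) (quot (rev_lang LF) (rev (map (tolet a b) s))).
  apply: (@dfa_rev_dist _ _ stepF (Some None) accF awF _ _ (Some None)) => //.
  by rewrite !revK /accF awF_None // runF_done.
have n0 : nth [::] wsF 0 = rev (awF None) by [].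
have nS k : k < 2 ^ m -> nth [::] wsF k.+1 = rev (map (tolet a b) (nth [::] (allbits m) k)).
  move=> hk; change (nth [::] (map (fun s => rev (map (tolet a b) s)) (allbits m)) k = rev (map (tolet a b) (nth [::] (allbits m) k))).
  by rewrite (nth_map [::]) ?size_allbits.
move: i j => [|i] [|j] //; rewrite !ltnS => hi hj; rewrite ?eqSS => hij.
- rewrite n0 nS //; exact: bot.
- rewrite n0 nS // => h.
  by apply: (bot (nth [::] (allbits m) i)); apply: lang_eq_sym.
have hi' : i < size (allbits m) by rewrite size_allbits.
have hj' : j < size (allbits m) by rewrite size_allbits.
rewrite !nS //.
set s := nth [::] (allbits m) i; set s' := nth [::] (allbits m) j.
have hs : size s = m by apply/eqP; rewrite -mem_allbits mem_nth.
have hs' : size s' = m by apply/eqP; rewrite -mem_allbits mem_nth.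
have hne : s != s' by rewrite nth_uniq // uniq_allbits.
have [j0 hj0 hd] := bits_diff hs hs' hne.
apply: (@dfa_rev_dist _ _ stepF (Some None) accF awF _ _ (pF (m' - j0))).
  by rewrite /awF run_cons hEF (run_nseq_a hAF hBF hZaF hZbF) // add0n modn_small // ltnS leq_subr.
rewrite !revK /accF.
have b1 := bits_run hAF hBF hZaF hZbF hpZF hs hj0.
have b2 := bits_run hAF hBF hZaF hZbF hpZF hs' hj0.
by rewrite b1 b2; move: hd; case: (nth false s j0); case: (nth false s' j0).
Qed.

Lemma LF_rev_sc : sc_eq (rev_lang LF) (2 ^ (m.+2 - 2) + 1).
Proof.
apply: (@sc_eq_of_le _ _ _ wsF).
- by apply: (factor_upper (n := m.+2)); [ | exact: LF_sc | exact: LF_factor].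
- by rewrite /wsF; set l := allbits m; rewrite /= size_map /l size_allbits addn1.
- by rewrite addn1; exact: LF_rev_dist.
Qed.
End FactorWitness.

Lemma factor_tight (S : finType) : 3 <= #|S| -> forall n, 2 <= n ->
  exists L : lang S, factor_closed L /\ sc_eq L n /\ sc_eq (rev_lang L) (2 ^ (n - 2) + 1).
Proof.
move=> hS [|[|[|m']]] // _.
  have [a [b [e [hab hae hbe]]]] := three_letters hS.
  exists (LA a); split; first by apply: subword_factor; apply: LA_subword.
  by split; [exact: (LA_sc hab) | exact: (LA_rev_sc hab)].
have [a [b [e [hab hae hbe]]]] := three_letters hS.
exists (LF a b m'); split; first exact: LF_factor.
by split; [exact: (LF_sc (e := e) m' hab hae hbe) | exact: (LF_rev_sc (e := e) m' hab hae hbe)].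
Qed.


Section SubwordWitness.
Variables (S : finType) (x0 : S) (xs : seq S) (m' : nat).
Local Notation m := m'.+1.
Hypothesis hxs : size xs = m + m.
Hypothesis hu : uniq xs.

Definition EL (i : nat) : S := nth x0 xs i.
Definition KL (i : nat) : S := nth x0 xs (m + i).

Definition stepW (s : option (option nat)) (c : S) : option (option nat) :=
  if s is Some o then
    (if index c xs < m then (if o is None then Some (Some (index c xs)) else None)
     else if index c xs < m + m then
       (if o is Some j then (if j == index c xs - m then None else s) else s)
     else s)
  else None.

Definition accW (s : option (option nat)) : bool := s != None.
Definition LW : lang S := fun w => accW (run stepW (Some None) w).

Lemma idxE i : i < m -> index (EL i) xs = i.
Proof. by move=> hi; rewrite /EL index_uniq // hxs (leq_trans hi) // leq_addr. Qed.
Lemma idxK i : i < m -> index (KL i) xs = m + i.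
Proof. by move=> hi; rewrite /KL index_uniq // hxs ltn_add2l. Qed.

Lemma stepW_doneE i : i < m -> stepW (Some None) (EL i) = pF i.
Proof. by move=> hi; rewrite /stepW idxE // hi. Qed.
Lemma stepW_pendE i j : i < m -> stepW (pF j) (EL i) = None.
Proof. by move=> hi; rewrite /stepW idxE // hi. Qed.
Lemma stepW_doneK i : i < m -> stepW (Some None) (KL i) = Some None.
Proof. by move=> hi; rewrite /stepW idxK // ltnNge leq_addr /= ltn_add2l hi. Qed.
Lemma stepW_pendK i j : i < m -> stepW (pF j) (KL i) = if j == i then None else pF j.
Proof. by move=> hi; rewrite /stepW idxK // ltnNge leq_addr /= ltn_add2l hi addKn. Qed.

Lemma runW_None w : run stepW None w = None.
Proof. by elim: w. Qed.

Lemma stepW_done_nonE c : ~~ (index c xs < m) -> stepW (Some None) c = Some None.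
Proof. by move=> h; rewrite /stepW (negbTE h); case: ifP. Qed.
Lemma stepW_pend_E c j : index c xs < m -> stepW (pF j) c = None.
Proof. by move=> h; rewrite /stepW h. Qed.
Lemma stepW_pend c j : stepW (pF j) c = None \/ stepW (pF j) c = pF j.
Proof.
rewrite /stepW; case: ifP => _; first by left.
case: ifP => _; last by right.
by case: ifP => _; [left | right].
Qed.

Definition leW (s1 s2 : option (option nat)) := (s1 == s2) || ((s1 == Some None) && (s2 != None)).

Lemma leW_nn s1 s2 : leW s1 s2 -> s2 != None -> s1 != None.
Proof. by case/orP => [/eqP ->|/andP [/eqP -> _]]. Qed.

Lemma leW_step1 s1 s2 c : leW s1 s2 -> stepW s2 c != None -> leW s1 (stepW s2 c).
Proof.
case/orP => [/eqP ->|/andP [/eqP -> _]] h; last by rewrite /leW h eqxx orbT.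
case: s2 h => [[j|]|] h.
- have [e|e] := stepW_pend c j; move: h; rewrite -/(pF j) e //.
  by rewrite /leW eqxx.
- by rewrite /leW h eqxx orbT.
- by [].
Qed.

Lemma leW_step2 s1 s2 c : leW s1 s2 -> stepW s2 c != None -> leW (stepW s1 c) (stepW s2 c).
Proof.
case/orP => [/eqP ->|/andP [/eqP -> hs2]] h; first by rewrite /leW eqxx.
case: s2 h hs2 => [[j|]|] h hs2 //; last by rewrite /leW eqxx.
case hc: (index c xs < m).
  by rewrite -/(pF j) stepW_pend_E in h.
by rewrite stepW_done_nonE ?hc // /leW h eqxx orbT.
Qed.

Lemma runW_subseq v u s1 s2 : subseq u v -> leW s1 s2 ->
  run stepW s2 v != None -> run stepW s1 u != None.
Proof.
elim: v u s1 s2 => [|c v IH] u s1 s2.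
  by rewrite subseq0 => /eqP -> hle h; apply: (leW_nn hle).
have hnn s : run stepW s v != None -> s != None by case: s => //; rewrite runW_None.
case: u => [|d u] hs hle h.
  apply: (leW_nn hle); move: h; rewrite run_cons.
  by case: s2 {hle} => //; rewrite runW_None.
rewrite run_cons in h; have hst := hnn _ h.
move: hs; rewrite [subseq _ _]/=; case: (d =P c) => [->|hne] hs.
  by rewrite run_cons; apply: (IH u _ _ hs (leW_step2 hle hst) h).
exact: (IH (d :: u) _ _ hs (leW_step1 hle hst) h).
Qed.

Lemma LW_subword : subword_closed LW.
Proof.
move=> u v hs; rewrite /LW /accW => h.
by apply: (runW_subseq hs _ h); rewrite /leW eqxx.
Qed.

Definition awW (s : option (option nat)) : seq S :=
  match s with
  | Some (Some r) => [:: EL r]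
  | Some None => [::]
  | None => [:: EL 0; EL 0]
  end.

Lemma LW_sc : sc_eq LW m.+2.
Proof.
apply: (@dfa_sc_eq _ _ stepW (Some None) accW (qsF m') awW).
- by rewrite /= size_map size_iota.
- have dIn : Some None \in qsF m' by rewrite /qsF in_cons in_cons eqxx orbT.
  move=> w; apply: (@run_inv _ _ stepW (fun s => s \in qsF m')) => //.
  move=> [[r|]|] c // hs.
  + by have [->|->] := stepW_pend c r; [rewrite /qsF in_cons eqxx | ].
  + case hc: (index c xs < m).
      by rewrite /stepW hc -/(pF _) mem_qsF hc.
    by rewrite stepW_done_nonE ?hc.
- move=> [[r|]|]; rewrite ?mem_qsF => hr //.
    by rewrite /awW run_cons stepW_doneE.
  by rewrite /awW !run_cons stepW_doneE // -/(pF 0) stepW_pendE.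
- move=> [|[|i]] [|[|j]] //; rewrite !ltnS => hi hj; rewrite ?eqSS => hij.
  + by exists [::]; rewrite ?nth_qsF.
  + by exists [::]; rewrite ?nth_qsF.
  + by exists [::]; rewrite ?nth_qsF.
  + exists [:: KL j]; rewrite nth_qsF // [nth _ _ 1]/=.
    by rewrite /accW !run_cons stepW_doneK // stepW_pendK // eqxx.
  + by exists [::]; rewrite ?nth_qsF.
  + exists [:: KL i]; rewrite nth_qsF // [nth _ _ 1]/=.
    by rewrite /accW !run_cons stepW_doneK // stepW_pendK // eqxx.
  + exists [:: KL i]; rewrite !nth_qsF //.
    have hji : (j == i) = false by rewrite eq_sym (negbTE hij).
    by rewrite /accW !run_cons !stepW_pendK // hji eqxx.
Qed.

Definition uW (s : seq bool) : seq S := map KL (filter (nth false s) (iota 0 m)).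

Lemma runW_done_K l : all (fun i => i < m) l -> run stepW (Some None) (map KL l) = Some None.
Proof.
elim: l => // i l IH; rewrite [all _ (_ :: _)]/= => /andP [hi hl].
by rewrite map_cons run_cons stepW_doneK // IH.
Qed.

Lemma runW_pend_K l j : all (fun i => i < m) l ->
  run stepW (pF j) (map KL l) = if j \in l then None else pF j.
Proof.
elim: l => // i l IH; rewrite [all _ (_ :: _)]/= => /andP [hi hl].
rewrite map_cons run_cons stepW_pendK // in_cons.
case: (j =P i) => _; first by rewrite runW_None.
exact: IH.
Qed.

Lemma all_filt s : all (fun i => i < m) (filter (nth false s) (iota 0 m)).
Proof. by apply/allP => i; rewrite mem_filter mem_iota add0n => /andP []. Qed.

Definition wsW := [:: EL 0; EL 0] :: map (fun s => rev (uW s)) (allbits m).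

Lemma LW_rev_dist i j : i < (2 ^ m).+1 -> j < (2 ^ m).+1 -> i != j ->
  ~ lang_eq (quot (rev_lang LW) (nth [::] wsW i)) (quot (rev_lang LW) (nth [::] wsW j)).
Proof.
have bot s : ~ lang_eq (quot (rev_lang LW) [:: EL 0; EL 0]) (quot (rev_lang LW) (rev (uW s))).
  apply: (@dfa_rev_dist _ _ stepW (Some None) accW awW _ _ (Some None)) => //.
  rewrite revK /uW runW_done_K ?all_filt // /accW.
  rewrite (_ : rev [:: EL 0; EL 0] = [:: EL 0; EL 0]) //.
  by rewrite !run_cons stepW_doneE // -/(pF 0) stepW_pendE.
have n0 : nth [::] wsW 0 = [:: EL 0; EL 0] by [].
have nS k : k < 2 ^ m -> nth [::] wsW k.+1 = rev (uW (nth [::] (allbits m) k)).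
  move=> hk; change (nth [::] (map (fun s => rev (uW s)) (allbits m)) k = rev (uW (nth [::] (allbits m) k))).
  by rewrite (nth_map [::]) ?size_allbits.
move: i j => [|i] [|j] //; rewrite !ltnS => hi hj; rewrite ?eqSS => hij.
- rewrite n0 nS //; exact: bot.
- rewrite n0 nS // => h.
  by apply: (bot (nth [::] (allbits m) i)); apply: lang_eq_sym.
have hi' : i < size (allbits m) by rewrite size_allbits.
have hj' : j < size (allbits m) by rewrite size_allbits.
rewrite !nS //.
set s := nth [::] (allbits m) i; set s' := nth [::] (allbits m) j.
have hs : size s = m by apply/eqP; rewrite -mem_allbits mem_nth.
have hs' : size s' = m by apply/eqP; rewrite -mem_allbits mem_nth.
have hne : s != s' by rewrite nth_uniq // uniq_allbits.
have [j0 hj0 hd] := bits_diff hs hs' hne.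
apply: (@dfa_rev_dist _ _ stepW (Some None) accW awW _ _ (pF j0)).
  by rewrite /awW run_cons stepW_doneE.
rewrite !revK /accW /uW !runW_pend_K ?all_filt // !mem_filter mem_iota add0n hj0 !andbT.
by move: hd; case: (nth false s j0); case: (nth false s' j0).
Qed.

Lemma LW_rev_sc : sc_eq (rev_lang LW) (2 ^ (m.+2 - 2) + 1).
Proof.
apply: (@sc_eq_of_le _ _ _ wsW).
- apply: (factor_upper (n := m.+2)) => //; first exact: LW_sc.
  exact: subword_factor LW_subword.
- by rewrite /wsW; set l := allbits m; rewrite /= size_map /l size_allbits addn1.
- by rewrite addn1; exact: LW_rev_dist.
Qed.
End SubwordWitness.

Lemma subword_tight : forall n, 2 <= n -> forall (S : finType), 2 * n <= #|S| ->
  exists L : lang S, subword_closed L /\ sc_eq L n /\ sc_eq (rev_lang L) (2 ^ (n - 2) + 1).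
Proof.
move=> [|[|[|m']]] // _ S hS.
  have [[|a [|z xs]] [hs hu]] := letters (leq_trans (isT : 2 <= 2 * 2) hS) => //.
  have haz : a != z by move: hu; rewrite /= inE negb_or => /andP [/andP []].
  exists (LA a); split; first exact: LA_subword.
  by split; [exact: (LA_sc haz) | exact: (LA_rev_sc haz)].
have hk : m'.+1 + m'.+1 <= #|S|.
  apply: leq_trans hS; rewrite mul2n -addnn.
  have h3 : m'.+1 <= m'.+3 by rewrite ltnS leqW.
  exact: leq_add.
have [[|x0 xs] [hs hu]] := letters hk => //.
exists (LW (x0 :: xs) m'); split; first exact: LW_subword.
by split; [exact: (LW_sc x0 hs hu) | exact: (LW_rev_sc x0 hs hu)].
Qed.


Theorem theorem5 :
  (* n = 1, L closed (in any of the four senses) *)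
  (forall (S : finType) (L : lang S), 0 < #|S| -> sc_eq L 1 ->
     (prefix_closed L \/ suffix_closed L \/ factor_closed L \/ subword_closed L) ->
     sc_eq (rev_lang L) 1) /\
  (* 1. prefix-closed *)
  (forall (S : finType) (L : lang S) (n : nat), 0 < #|S| -> 2 <= n -> sc_eq L n ->
     prefix_closed L -> sc_le (rev_lang L) (2 ^ n.-1)) /\
  (forall (S : finType), 2 <= #|S| -> forall n, 2 <= n ->
     exists L : lang S, prefix_closed L /\ sc_eq L n /\ sc_eq (rev_lang L) (2 ^ n.-1)) /\
  (* 2. suffix-closed *)
  (forall (S : finType) (L : lang S) (n : nat), 0 < #|S| -> 2 <= n -> sc_eq L n ->
     suffix_closed L -> sc_le (rev_lang L) (2 ^ n.-1 + 1)) /\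
  (forall (S : finType), 3 <= #|S| -> forall n, 2 <= n ->
     exists L : lang S, suffix_closed L /\ sc_eq L n /\ sc_eq (rev_lang L) (2 ^ n.-1 + 1)) /\
  (* 3. factor-closed *)
  (forall (S : finType) (L : lang S) (n : nat), 0 < #|S| -> 2 <= n -> sc_eq L n ->
     factor_closed L -> sc_le (rev_lang L) (2 ^ (n - 2) + 1)) /\
  (forall (S : finType), 3 <= #|S| -> forall n, 2 <= n ->
     exists L : lang S, factor_closed L /\ sc_eq L n /\ sc_eq (rev_lang L) (2 ^ (n - 2) + 1)) /\
  (* 4. subword-closed *)
  (forall (S : finType) (L : lang S) (n : nat), 0 < #|S| -> 2 <= n -> sc_eq L n ->
     subword_closed L -> sc_le (rev_lang L) (2 ^ (n - 2) + 1)) /\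
  (forall n, 2 <= n -> forall (S : finType), 2 * n <= #|S| ->
     exists L : lang S, subword_closed L /\ sc_eq L n /\ sc_eq (rev_lang L) (2 ^ (n - 2) + 1)).
Proof.
split; first by move=> S L _ h _; exact: closed_one.
split; first by move=> S L n _ hn hL hp; exact: prefix_upper hn hL hp.
split; first exact: prefix_tight.
split; first by move=> S L n _ hn hL hs; exact: suffix_upper hL hs.
split; first exact: suffix_tight.
split; first by move=> S L n _ hn hL hf; exact: factor_upper hn hL hf.
split; first exact: factor_tight.
split; first by move=> S L n _ hn hL hw; exact: factor_upper hn hL (subword_factor hw).
exact: subword_tight.
Qed.
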